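(* Let $\lambda>0$, $d\in\mathbb{N}$, and equip $\mathbb{R}^d$ with $\|x\|_1=\sum_{i=1}^d|x_i|$. Define $Q:\mathbb{R}^d\to\mathbb{R}^d$ by $Q(x_1,\dots,x_d)=(\lambda-x_d,x_1,\dots,x_{d-1})$, $P_C:\mathbb{R}^d\to\mathbb{R}^d$ by $(P_C(x))_i=P_{[0,\lambda]}(x_i)$, where $P_{[0,\lambda]}(t)=\min\{\max\{t,0\},\lambda\}$, and $T=Q\circ P_C$. For $x\in\mathbb{R}^d$, let $\operatorname{prog}(x)=\max\{i\in\{1,\dots,d\}: |x_i|>0\}$ and $\operatorname{prog}(0)=0$. Then for all $x\in\mathbb{R}^d$ with $\operatorname{prog}(x)<d$, $\|x-Tx\|_1\ge\lambda$. *)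

(* Defs.v *)
From mathcomp Require Import all_boot all_order all_algebra.
Set Implicit Arguments. Unset Strict Implicit. Unset Printing Implicit Defensive.
Import Order.TTheory GRing.Theory Num.Theory.
Local Open Scope ring_scope.

(* Vectors of R^d are represented as 'rV[R]_d; coordinate i (0-based) is x ord0 i. *)

Definition norm1 (R : realFieldType) (d : nat) (x : 'rV[R]_d) : R :=
  \sum_(i < d) `|x ord0 i|.

Definition proj01 (R : realFieldType) (lam t : R) : R :=
  Num.min (Num.max t 0) lam.

Definition PC (R : realFieldType) (d : nat) (lam : R) (x : 'rV[R]_d) : 'rV[R]_d :=
  \row_(i < d) proj01 lam (x ord0 i).

(* coordinate k (0-based) as a nat index; only used with k < d *)
Definition coord (R : realFieldType) (d : nat) (x : 'rV[R]_d) (k : nat) : R :=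
  match @insub nat (fun k => (k < d)%N) 'I_d k with Some j => x ord0 j | None => 0 end.

Definition Qmap (R : realFieldType) (d : nat) (lam : R) (x : 'rV[R]_d) : 'rV[R]_d :=
  \row_(i < d) (if (i : nat) == 0%N then lam - coord x d.-1
                else coord x i.-1).

Definition Tmap (R : realFieldType) (d : nat) (lam : R) (x : 'rV[R]_d) : 'rV[R]_d :=
  Qmap lam (PC lam x).

Definition prog (R : realFieldType) (d : nat) (x : 'rV[R]_d) : nat :=
  \max_(i < d | 0 < `|x ord0 i|) i.+1.

(* Main.v *)
Require Import Defs.
From mathcomp Require Import all_boot all_order all_algebra.
From mathcomp Require Import lra.
Import Order.TTheory GRing.Theory Num.Theory.
Local Open Scope ring_scope.

Lemma proj01_in (R : realFieldType) (lam a : R) : 0 <= lam ->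
  0 <= proj01 lam a <= lam.
Proof.
move=> hl; rewrite /proj01.
case: (boolP (a <= 0)) => ha; last (move: ha; rewrite -ltNge => ha).
  by rewrite max_r // min_l // lexx.
rewrite max_l; last exact: ltW.
case: (boolP (a <= lam)) => hb; last (move: hb; rewrite -ltNge => hb); first by rewrite min_l // (ltW ha) hb.
by rewrite min_r ?hl ?lexx //; exact: ltW.
Qed.

Lemma proj01_ne (R : realFieldType) (lam a b : R) : 0 <= b <= lam ->
  `|proj01 lam a - b| <= `|a - b|.
Proof.
case/andP=> hb0 hbl; rewrite /proj01.
case: (boolP (a <= 0)) => ha; last (move: ha; rewrite -ltNge => ha).
  rewrite max_r // min_l; last exact: le_trans hb0 hbl.
  rewrite sub0r normrN ger0_norm // ler0_norm; last by lra.
  lra.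
rewrite max_l; last exact: ltW.
case: (boolP (a <= lam)) => hb; last (move: hb; rewrite -ltNge => hb); first by rewrite min_l.
rewrite min_r; last exact: ltW.
rewrite ger0_norm; last by lra.
rewrite ger0_norm; last by lra.
lra.
Qed.

Lemma coordE (R : realFieldType) (n : nat) (x : 'rV[R]_n.+1) (k : nat) :
  (k < n.+1)%N -> Defs.coord x k = x ord0 (inord k).
Proof.
move=> hk; rewrite /Defs.coord insubT /=; congr (x ord0 _).
by apply: val_inj; rewrite /= inordK.
Qed.

Theorem lemma2 (R : realFieldType) (lam : R) (d : nat) (x : 'rV[R]_d) :
  0 < lam -> (prog x < d)%N -> lam <= norm1 (x - Tmap lam x).
Proof.
move=> hl; case: d x => [|n] x //.
move=> hp.
have xn : x ord0 ord_max = 0.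
  apply/eqP; rewrite -normr_eq0; apply/negPn/negP => hne.
  have h0 : 0 < `|x ord0 ord_max| by rewrite lt_def hne normr_ge0.
  have := @leq_bigmax_cond _ (fun i : 'I_n.+1 => 0 < `|x ord0 i|)
            (fun i : 'I_n.+1 => (i : nat).+1) ord_max h0.
  rewrite /= -/(prog x) => h.
  by have := leq_ltn_trans h hp; rewrite ltnn.
pose xx (i : nat) := x ord0 (inord i).
pose yy (i : nat) := proj01 lam (xx i).
pose tx (i : nat) := if i == 0%N then lam - yy n else yy i.-1.
pose G (i : nat) := `|xx i - tx i|.
have ylam i : 0 <= yy i <= lam by apply: proj01_in; exact: ltW.
have yn : yy n = 0.
  rewrite /yy /xx.
  have -> : (inord n : 'I_n.+1) = ord_max by apply: val_inj; rewrite /= inordK.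
  by rewrite xn /proj01 maxxx min_l //; exact: ltW.
have -> : norm1 (x - Tmap lam x) = \sum_(i < n.+1) G i.
  rewrite /norm1; apply: eq_bigr => i _.
  rewrite /G /xx /tx !mxE inord_val; congr `|_ - _|.
  case: eqP => h.
    by rewrite coordE // /yy /xx mxE.
  rewrite coordE; last by rewrite (leq_ltn_trans (leq_pred _)) // ltn_ord.
  by rewrite mxE.
have key : forall j, (j <= n)%N -> lam - yy j <= \sum_(i < j.+1) G i.
  elim=> [|j IH] hj.
    rewrite big_ord1 /G /tx /= yn subr0.
    have h : `|yy 0%N - lam| <= `|xx 0%N - lam|.
      by apply: proj01_ne; rewrite lexx (ltW hl).
    have h2 : lam - yy 0%N <= `|yy 0%N - lam|.
      by rewrite distrC; exact: ler_norm.
    exact: le_trans h2 h.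
  rewrite big_ord_recr /=.
  have h0 := IH (ltnW hj).
  have h1 : `|yy j.+1 - yy j| <= `|xx j.+1 - yy j| by apply: proj01_ne.
  have h2 : yy j - yy j.+1 <= `|yy j.+1 - yy j|.
    by rewrite distrC; exact: ler_norm.
  have -> : G j.+1 = `|xx j.+1 - yy j| by [].
  lra.
by have := key n (leqnn n); rewrite yn subr0.
Qed.
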